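(* Let $p(L,M,D;\mu\to1)$ be a generative reasoning model, let $\alpha\in L$, and let $\Delta\subseteq L$ be finite. Then $p(\alpha\mid\Delta)=1$ if and only if $S\mathrel{|\!\!\equiv}\alpha$ for every cardinality-maximal possible subset $S$ of $\Delta$.
   Context: Fix a multiset of data $\{d_1,\dots,d_K\}$ with $K\ge1$, and a propositional language $L$ over finitely many atoms, with set of models (truth assignments) $\mathcal M$. A function $m:\{d_1,\dots,d_K\}\to\mathcal M$ assigns to each datum the model it supports. The probability of a model $n$ is $p(n)=|\{k:m(d_k)=n\}|/K$. For $\mu\in(0,1)$ and $\alpha\in L$, set $p(\alpha\mid m)=\mu$ if $m$ satisfies $\alpha$ and $1-\mu$ otherwise. For finite $\Delta$, set $p(\Delta\mid m)=\prod_{\beta\in\Delta}p(\beta\mid m)$, which is $1$ for empty $\Delta$. In $p(L,M,D;\mu\to1)$, $$p(\alpha\mid\Delta)=\lim_{\mu\to1^-}\frac{\sum_{m}p(\alpha\mid m)p(\Delta\mid m)p(m)}{\sum_m p(\Delta\mid m)p(m)}.$$ Notation and definitions: - For $S\subseteq L$, $[\![S]\!]$ is the set of models satisfying every formula of $S$, $[\![\alpha]\!]=[\![\{\alpha\}]\!]$, and $[\![S]\!]_p=\{m\in[\![S]\!]:p(m)\neq0\}$. - $S\mathrel{|\!\!\equiv}\alpha$ (empirical consequence) means $[\![S]\!]_p\subseteq[\![\alpha]\!]_p$. - $S\subseteq\Delta$ is a maximal possible subset of $\Delta$ if $[\![S]\!]_p\neq\emptyset$ and $[\![S\cup\{\beta\}]\!]_p=\emptyset$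 for all $\beta\in\Delta\setminus S$. - A cardinality-maximal possible subset is a maximal possible subset of maximum cardinality among all maximal possible subsets of $\Delta$. *)

(* Defs.v *)
From HB Require Import structures.
From mathcomp Require Import all_boot all_order all_algebra.
From mathcomp Require Import all_classical all_reals all_analysis.
Set Implicit Arguments. Unset Strict Implicit. Unset Printing Implicit Defensive.
Import Order.TTheory GRing.Theory Num.Theory.
Local Open Scope ring_scope.

Inductive pform (A : Type) : Type :=
| Atom of A
| Neg of pform A
| And of pform A & pform A
| Or of pform A & pform A
| Imp of pform A & pform A.

Section FormCount.
Variable A : countType.
Fixpoint enc (f : pform A) : GenTree.tree A :=
  match f with
  | Atom a => GenTree.Leaf a
  | Neg f => GenTree.Node 0 [:: enc f]
  | And f g => GenTree.Node 1 [:: enc f; enc g]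
  | Or f g => GenTree.Node 2 [:: enc f; enc g]
  | Imp f g => GenTree.Node 3 [:: enc f; enc g]
  end.
Fixpoint dec (t : GenTree.tree A) : option (pform A) :=
  match t with
  | GenTree.Leaf a => Some (Atom a)
  | GenTree.Node 0 [:: t] => omap (@Neg A) (dec t)
  | GenTree.Node n [:: t; u] =>
      match dec t, dec u with
      | Some f, Some g =>
          match n with
          | 1 => Some (And f g) | 2 => Some (Or f g) | 3 => Some (Imp f g)
          | _ => None end
      | _, _ => None end
  | _ => None
  end.
Lemma encK : pcancel enc dec.
Proof. by elim=> //= [f -> | f -> g -> | f -> g -> | f -> g ->]. Qed.
HB.instance Definition _ := Countable.copy (pform A) (pcan_type encK).
End FormCount.

Definition pmodel (A : finType) := {ffun A -> bool}.

Fixpoint sat (A : finType) (v : pmodel A) (f : pform A) : bool :=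
  match f with
  | Atom a => v a
  | Neg f => ~~ sat v f
  | And f g => sat v f && sat v g
  | Or f g => sat v f || sat v g
  | Imp f g => sat v f ==> sat v g
  end.

Section GRM.
Variables (R : realType) (A : finType) (K : nat) (dm : 'I_K -> pmodel A).

(* p(n) = |{k : m(d_k) = n}| / K ; data indexed by 'I_K, dm k = m(d_k) *)
Definition pm (n : pmodel A) : R := #|[set k | dm k == n]|%:R / K%:R.

Definition pf (mu : R) (v : pmodel A) (a : pform A) : R :=
  if sat v a then mu else 1 - mu.

Definition pD (mu : R) (v : pmodel A) (D : seq (pform A)) : R :=
  \prod_(b <- D) pf mu v b.

(* the grm_ratio whose limit as mu -> 1^- defines p(alpha | Delta) *)
Definition grm_ratio (a : pform A) (D : seq (pform A)) (mu : R) : R :=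
  (\sum_(v : pmodel A) pf mu v a * pD mu v D * pm v) /
  (\sum_(v : pmodel A) pD mu v D * pm v).

Definition possible (S : seq (pform A)) : Prop :=
  exists v : pmodel A, pm v != 0 /\ all (sat v) S.

Definition emp_cons (S : seq (pform A)) (a : pform A) : Prop :=
  forall v : pmodel A, pm v != 0 -> all (sat v) S -> sat v a.

(* finite sets of formulas are represented by duplicate-free sequences *)
Definition maximal_possible (D S : seq (pform A)) : Prop :=
  [/\ uniq S, {subset S <= D}, possible S &
      forall b, b \in D -> b \notin S -> ~ possible (b :: S)].

Definition card_max_possible (D S : seq (pform A)) : Prop :=
  maximal_possible D S /\
  forall S', maximal_possible D S' -> (size S' <= size S)%N.
End GRM.

(* Main.v *)
Require Import Defs.
From HB Require Import structures.
From mathcomp Require Import all_boot all_order all_algebra.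
From mathcomp Require Import all_classical all_reals all_analysis.
From mathcomp Require Import zify.
Import Order.TTheory GRing.Theory Num.Theory numFieldNormedType.Exports.
Local Open Scope classical_set_scope.
Local Open Scope ring_scope.

Section Comb.
Variables (R : realType) (A : finType) (K : nat) (dm : 'I_K -> pmodel A).
Variables (D : seq (pform A)) (a : pform A) (hD : uniq D).
Variable vb : pmodel A.
Hypothesis Hvb : pm R dm vb != 0.
Hypothesis Hmin : forall v, pm R dm v != 0 ->
  (count (predC (sat v)) D >= count (predC (sat vb)) D)%N.

Lemma possible_size S : uniq S -> possible R dm S -> {subset S <= D} ->
  exists w, pm R dm w != 0 /\ all (sat w) S /\ (size S <= count (sat w) D)%N.
Proof.
move=> uS [w [Hw Hall]] sS; exists w; split => //; split => //.
rewrite -size_filter; apply: uniq_leq_size => // x xS.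
by rewrite mem_filter (allP Hall x xS) sS.
Qed.

Lemma cnt_le v : pm R dm v != 0 -> (count (sat v) D <= count (sat vb) D)%N.
Proof.
move=> Pv; have := count_predC (sat v) D; have := count_predC (sat vb) D.
have := @Hmin _ Pv; lia.
Qed.

Lemma best_cmp v : pm R dm v != 0 ->
  count (predC (sat v)) D = count (predC (sat vb)) D ->
  card_max_possible R dm D (seq.filter (sat v) D).
Proof.
move=> Pv ej.
have ec : count (sat v) D = count (sat vb) D.
  have := count_predC (sat v) D; have := count_predC (sat vb) D; lia.
have sub : {subset seq.filter (sat v) D <= D}.
  by move=> x; rewrite mem_filter => /andP[].
split.
  split.
  - exact: filter_uniq.
  - exact: sub.
  - by exists v; split => //; apply: filter_all.
  - move=> b bD bnot ps.
    have hu : uniq (b :: seq.filter (sat v) D) by rewrite /= bnot filter_uniq.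
    have hs : {subset b :: seq.filter (sat v) D <= D}.
      move=> x; rewrite inE => /orP[/eqP->//|]; exact: sub.
    have [w [Hw [_ Hs]]] := possible_size _ hu ps hs.
    have := @cnt_le _ Hw; move: Hs; rewrite /= size_filter ec; lia.
move=> S' [uS' sS' pS' _].
have [w [Hw [_ Hs]]] := possible_size _ uS' pS' sS'.
have := @cnt_le _ Hw; move: Hs; rewrite size_filter ec; exact: leq_trans.
Qed.

Lemma comb_equiv :
  (forall S, card_max_possible R dm D S -> emp_cons R dm S a) <->
  (forall v, pm R dm v != 0 ->
     count (predC (sat v)) D = count (predC (sat vb)) D -> sat v a).
Proof.
split.
  move=> H v Pv ej; apply: (H _ (@best_cmp _ Pv ej)) => //.
  exact: filter_all.
move=> H S [[uS sS pS _] Hmax] w Hw Hall.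
apply: H => //.
have := Hmax _ (proj1 (@best_cmp _ Hvb erefl)).
rewrite size_filter.
have : (size S <= count (sat w) D)%N.
  rewrite -size_filter; apply: uniq_leq_size => // x xS.
  by rewrite mem_filter (allP Hall x xS) sS.
have := @Hmin _ Hw; have := count_predC (sat w) D; have := count_predC (sat vb) D.
lia.
Qed.
End Comb.

Section Lim.
Variable (R : realType).

Lemma cvg_sumr {T : Type} {F : set_system T} {FF : Filter F} (I : Type)
  (r : seq I) (f : I -> T -> R) (l : I -> R) :
  (forall i, f i @ F --> l i) ->
  (fun x => \sum_(i <- r) f i x) @ F --> \sum_(i <- r) l i.
Proof.
move=> h; elim: r => [|i r IH].
  rewrite big_nil; under eq_cvg do rewrite big_nil; exact: cvg_cst.
rewrite big_cons; under eq_cvg do rewrite big_cons.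
exact: cvgD.
Qed.

Lemma cvgXn {T : Type} {F : set_system T} {FF : Filter F} (f : T -> R) (l : R) n :
  f @ F --> l -> (fun x => f x ^+ n) @ F --> l ^+ n.
Proof.
move=> h; elim: n => [|n IH].
  rewrite expr0; under eq_cvg do rewrite expr0; exact: cvg_cst.
rewrite exprS; under eq_cvg do rewrite exprS.
exact: cvgM.
Qed.

Lemma cvg_left_id : (fun mu : R => mu) @ (1:R)^'- --> (1:R).
Proof. apply: cvg_at_left_filter; exact: cvg_id. Qed.

Lemma cvg_left_1m : (fun mu : R => 1 - mu) @ (1:R)^'- --> (0:R).
Proof.
rewrite -(subrr (1:R)); apply: cvgB; [exact: cvg_cst | exact: cvg_left_id].
Qed.
End Lim.

Lemma pD_eq (R : realType) (A : finType) (mu : R) (v : pmodel A) (D : seq (pform A)) :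
  pD mu v D = mu ^+ count (sat v) D * (1 - mu) ^+ count (predC (sat v)) D.
Proof.
rewrite /pD; elim: D => [|b D IH]; first by rewrite big_nil mulr1.
rewrite big_cons IH /pf /=; case: (sat v b) => /=; rewrite ?add0n ?add1n !exprS.
  by rewrite mulrA.
by rewrite mulrCA.
Qed.

Lemma pm_ge0 (R : realType) (A : finType) K (dm : 'I_K -> pmodel A) v : 0 <= pm R dm v.
Proof. by rewrite /pm divr_ge0. Qed.

Lemma pm_dm_neq0 (R : realType) (A : finType) K (hK : (0 < K)%N)
  (dm : 'I_K -> pmodel A) k : pm R dm (dm k) != 0.
Proof.
rewrite /pm mulf_neq0 // ?invr_eq0 pnatr_eq0 -lt0n //.
by rewrite card_gt0; apply/set0Pn; exists k; rewrite inE.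
Qed.

Theorem corollary4 (R : realType) (A : finType) (K : nat) (hK : (0 < K)%N)
  (dm : 'I_K -> pmodel A) (a : pform A) (D : seq (pform A)) (hD : uniq D) :
  (@grm_ratio R A K dm a D mu @[mu --> (1 : R)^'-] --> (1 : R)) <->
  (forall S, @card_max_possible R A K dm D S -> @emp_cons R A K dm S a).
Proof.
have [vb Hvb Hmin] : exists2 vb, pm R dm vb != 0 & forall v, pm R dm v != 0 ->
    (count (predC (sat vb)) D <= count (predC (sat v)) D)%N.
  have h0 := @pm_dm_neq0 R A K hK dm (Ordinal hK).
  case: (@arg_minnP _ _ (fun v => pm R dm v != 0) (fun v => count (predC (sat v)) D) h0) => vb H1 H2.
  by exists vb.
rewrite (@comb_equiv R A K dm D a hD vb Hvb Hmin).
pose j v := count (predC (sat v)) D.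
pose js := j vb.
pose c v := count (sat v) D.
pose Fv v (mu : R) := pm R dm v * (mu ^+ c v * (1 - mu) ^+ (j v - js)).
pose I v : R := if sat v a then 1 else 0.
pose G v : R := pm R dm v * (1 ^+ c v * 0 ^+ (j v - js)).
pose NL := \sum_v I v * G v.
pose DL := \sum_v G v.
have eq_near : {near (1:R)^'-, (fun mu => (\sum_v pf mu v a * Fv v mu) / \sum_v Fv v mu)
    =1 grm_ratio dm a D}.
  near=> mu.
  have mu1 : mu < 1 by near: mu; exact: nbhs_left_lt.
  have X0 : (1 - mu) ^+ js != 0 by rewrite expf_neq0 // subr_eq0 gt_eqF.
  have e v : pD mu v D * pm R dm v = Fv v mu * (1 - mu) ^+ js.
    rewrite pD_eq /Fv /js /j /c.
    have [->|Pv] := eqVneq (pm R dm v) 0; first by rewrite !(mulr0, mul0r).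
    rewrite -[in LHS](subnK (Hmin v Pv)) exprD.
    by rewrite mulrC !mulrA.
  have eN : \sum_v pf mu v a * pD mu v D * pm R dm v
      = (\sum_v pf mu v a * Fv v mu) * (1 - mu) ^+ js.
    by rewrite mulr_suml; apply: eq_bigr => v _; rewrite -mulrA e mulrA.
  have eD : \sum_v pD mu v D * pm R dm v = (\sum_v Fv v mu) * (1 - mu) ^+ js.
    by rewrite mulr_suml; apply: eq_bigr => v _; rewrite e.
  by rewrite /grm_ratio eN eD invfM mulrACA mulfV // mulr1.
have hF v : Fv v @ (1:R)^'- --> G v.
  apply: cvgM; first exact: cvg_cst.
  apply: cvgM; [exact: cvgXn (cvg_left_id R) | exact: cvgXn (cvg_left_1m R)].
have hpf v : (fun mu => pf mu v a) @ (1:R)^'- --> I v.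
  rewrite /pf /I; case: (sat v a); [exact: cvg_left_id | exact: cvg_left_1m].
have hN : (fun mu => \sum_v pf mu v a * Fv v mu) @ (1:R)^'- --> NL.
  by apply: cvg_sumr => v; apply: cvgM.
have hDL : (fun mu => \sum_v Fv v mu) @ (1:R)^'- --> DL.
  by apply: cvg_sumr => v; apply: hF.
have G0 v : 0 <= G v.
  rewrite /G expr1n mul1r expr0n; apply: mulr_ge0; [exact: pm_ge0 | exact: ler0n].
have DL0 : DL != 0.
  apply/negP => /eqP h.
  have := @psumr_eq0P _ _ _ _ (fun v _ => G0 v) h vb isT.
  rewrite /G /js subnn expr0 expr1n !mulr1 => h'.
  by rewrite h' eqxx in Hvb.
have hL : grm_ratio dm a D @ (1:R)^'- --> NL / DL.
  apply: cvg_trans (near_eq_cvg eq_near) _.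
  exact: cvgM hN (cvgV DL0 hDL).
have key : NL / DL = 1 <-> (forall v, pm R dm v != 0 ->
     count (predC (sat v)) D = count (predC (sat vb)) D -> sat v a).
  split.
    move=> e1.
    have eND : NL = DL by rewrite -[NL](divfK DL0) e1 mul1r.
    have s0 : \sum_v (1 - I v) * G v = 0.
      rewrite (eq_bigr (fun v => G v - I v * G v)); last first.
        by move=> v _; rewrite mulrBl mul1r.
      by rewrite sumrB -/NL -/DL eND subrr.
    have I0 v : 0 <= (1 - I v) * G v.
      apply: mulr_ge0 => //; rewrite /I; case: (sat v a).
        by rewrite subrr.
      by rewrite subr0 ler01.
    move=> v Pv ejv.
    have := @psumr_eq0P _ _ _ _ (fun v _ => I0 v) s0 v isT.
    case sv: (sat v a) => //.
    rewrite /I sv subr0 mul1r /G /j /js /j ejv subnn expr0 expr1n !mulr1 => h.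
    by rewrite h eqxx in Pv.
  move=> H.
  suff -> : NL = DL by rewrite divff.
  apply: eq_bigr => v _; rewrite /I; case sv: (sat v a); first by rewrite mul1r.
  rewrite mul0r /G; have [->|Pv] := eqVneq (pm R dm v) 0; first by rewrite mul0r.
  have ne : j v != js by apply/eqP => e; move: (H v Pv e); rewrite sv.
  rewrite expr0n subn_eq0 (_ : (j v <= js)%N = false) ?mulr0 //.
  apply/negbTE; rewrite -ltnNge ltn_neqAle eq_sym ne.
  exact: Hmin.
split.
  move=> h1; apply/key.
  have := cvg_lim (@Rhausdorff R) hL; rewrite (cvg_lim (@Rhausdorff R) h1).
  by move=> <-.
move=> H; move: hL; by rewrite (proj2 key H).
Unshelve. all: by end_near.
Qed.
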